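(* Let $(G,\mathcal{C})$ be CER with respect to the ordering $(V_{\eta_1},\dots,V_{\eta_r})$, with $2$-path function $m$ computed for this ordering. Then: (1) for every $k\in F$, $\mathrm{BlockDiag}(J^k)=J^k=\mathrm{BlockTri}(J^k)$; (2) for every $k\in[r+R]\setminus F$, $\mathrm{BlockDiag}(J^k)=0$; (3) for all $k,h\in F$ and all $\{v,w\}\in\tilde E$, $[J^kJ^h]_{vw}=m_{v\to w}(k,h)$; (4) if moreover (M2) holds, then for every $i\in[r]$ and all $k,h\in F_i$, $J^kJ^h=J^hJ^k$.
   Context: $G=(V,E)$ finite simple undirected graph, $V=[p]$; coloring: vertex color classes $V_1,\dots,V_r$, edge color classes $E_{r+1},\dots,E_{r+R}$ partitioning $E$. $\tilde E=E\cup\{\{v\}:v\in V\}$, $E_i=\{\{v\}:v\in V_i\}$; $c(v,w)=k$ iff $\{v,w\}\in E_k$, $c(v)=c(v,v)$, $c(v,w)=0$ for non-adjacent distinct $v,w$. $J^k\in\{0,1\}^{p\times p}$ with $J^k_{vw}=1$ iff $c(v,w)=k$. $\pi(v)=i$ iff $v\in V_{\eta_i}$; $V_{\le i}=V_{\eta_1}\cup\dots\cup V_{\eta_i}$. For a $p\times p$ matrix $Y$: $\mathrm{BlockTri}(Y)_{vu}=Y_{vu}$ if $\pi(u)\le\pi(v)$ and $0$ otherwise; $\mathrm{BlockDiag}(Y)_{vu}=Y_{vu}$ if $c(v)=c(u)$ and $0$ otherwise. $m_{v\to w}(k,h)=|\{u\in V_{\le\min(\pi(v),\pi(w))}: c(v,u)=k,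 c(u,w)=h\}|$, $m_{v\leftrightarrow w}(k,h)=m_{v\to w}(k,h)+m_{v\to w}(h,k)$. $F_i=\{c(v,w):\{v,w\}\in\tilde E,\ c(v)=c(w)=i\}$, $F=\bigcup_iF_i$. cpeo: every $v\in V_{\eta_i}$ is simplicial (neighbours form a clique) in $G[V_{\eta_i}\cup\dots\cup V_{\eta_r}]$. (M1): $c(v,w)=c(v',w')$ implies $m_{v\leftrightarrow w}=m_{v'\leftrightarrow w'}$. (M2): $c(v)=c(w)$ implies $m_{v\to w}(k,h)=m_{w\to v}(k,h)$ for all $k,h\in F$. CER with respect to the ordering: it is a cpeo and (M1) holds. *)

(* Defs.v *)
From HB Require Import structures.
From mathcomp Require Import all_boot all_order all_algebra.
Set Implicit Arguments. Unset Strict Implicit. Unset Printing Implicit Defensive.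
Import GRing.Theory.

(* Colored graphs on V = 'I_p (i.e. [p]), vertex colors 1..r, edge colors
   r+1..r+R, color 0 for non-adjacent distinct pairs. *)
Section ColoredGraph.
Variables (p r R : nat) (adj : rel 'I_p) (vcol : 'I_p -> nat)
          (ecol : 'I_p -> 'I_p -> nat) (eta : nat -> nat).

Definition colored_graph : Prop :=
  [/\ (forall v w, adj v w = adj w v), (forall v, ~~ adj v v),
      (forall v, 1 <= vcol v <= r),
      (forall v w, ecol v w = ecol w v) &
      (forall v w, adj v w -> r < ecol v w <= r + R)].

(* eta is an ordering (V_{eta_1},...,V_{eta_r}) of the vertex color classes *)
Definition ordering : Prop :=
  (forall i, 1 <= i <= r -> 1 <= eta i <= r) /\
  {in [pred i | 1 <= i <= r] &, injective eta}.

Definition col (v w : 'I_p) : nat :=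
  if v == w then vcol v else if adj v w then ecol v w else 0.

Definition inEt (v w : 'I_p) : bool := (v == w) || adj v w.

Definition Jm (k : nat) : 'M[int]_p := \matrix_(v, w) ((col v w == k) : int).

(* pi(v) = i iff v in V_{eta_i} *)
Definition piv (v : 'I_p) : nat := (index (vcol v) (map eta (iota 1 r))).+1.

Definition BlockTri (Y : 'M[int]_p) : 'M[int]_p :=
  \matrix_(v, u) (if piv u <= piv v then Y v u else 0).
Definition BlockDiag (Y : 'M[int]_p) : 'M[int]_p :=
  \matrix_(v, u) (if vcol v == vcol u then Y v u else 0).

Definition m2 (v w : 'I_p) (k h : nat) : nat :=
  #|[set u : 'I_p | (piv u <= minn (piv v) (piv w)) && (col v u == k) && (col u w == h)]|.
Definition m2b (v w : 'I_p) (k h : nat) : nat := m2 v w k h + m2 v w h k.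

Definition inFi (i k : nat) : Prop :=
  exists v w, [/\ inEt v w, vcol v = i, vcol w = i & col v w = k].
Definition inF (k : nat) : Prop := exists i, inFi i k.

Definition cpeo : Prop :=
  forall v u1 u2 : 'I_p, piv v <= piv u1 -> piv v <= piv u2 ->
    adj v u1 -> adj v u2 -> u1 != u2 -> adj u1 u2.

Definition M1 : Prop :=
  forall v w v' w', inEt v w -> inEt v' w' -> col v w = col v' w' ->
    forall k h, m2b v w k h = m2b v' w' k h.

Definition M2 : Prop :=
  forall v w, vcol v = vcol w -> forall k h, inF k -> inF h -> m2 v w k h = m2 w v k h.

Definition CER : Prop := cpeo /\ M1.

End ColoredGraph.

(* Main.v *)
Require Import Defs.
From mathcomp Require Import all_boot all_order all_algebra.
From mathcomp Require Import zify.
From Stdlib Require Import Lia.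
Import GRing.Theory.
Local Open Scope ring_scope.

Theorem proposition7p5 (p r R : nat) (adj : rel 'I_p) (vcol : 'I_p -> nat)
    (ecol : 'I_p -> 'I_p -> nat) (eta : nat -> nat) :
  colored_graph r R adj vcol ecol ->
  ordering r eta ->
  CER r adj vcol ecol eta ->
  [/\ (forall k, inF adj vcol ecol k ->
         BlockDiag vcol (Jm adj vcol ecol k) = Jm adj vcol ecol k /\
         Jm adj vcol ecol k = BlockTri r vcol eta (Jm adj vcol ecol k)),
      (forall k, (1 <= k <= r + R)%N -> ~ inF adj vcol ecol k ->
         BlockDiag vcol (Jm adj vcol ecol k) = 0),
      (forall k h, inF adj vcol ecol k -> inF adj vcol ecol h ->
         forall v w, inEt adj v w ->
           (Jm adj vcol ecol k *m Jm adj vcol ecol h) v w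
           = (m2 r adj vcol ecol eta v w k h)%:Z) &
      (M2 r adj vcol ecol eta ->
         forall i, (1 <= i <= r)%N -> forall k h,
           inFi adj vcol ecol i k -> inFi adj vcol ecol i h ->
           Jm adj vcol ecol k *m Jm adj vcol ecol h
           = Jm adj vcol ecol h *m Jm adj vcol ecol k)].
Proof.
Proof.
case=> adjC adjI vcolB ecolC ecolB _ [_ HM1].
have colC : forall v w, Defs.col adj vcol ecol v w = Defs.col adj vcol ecol w v.
  move=> v w; rewrite /Defs.col eq_sym adjC ecolC; by case: (w =P v) => [->|].
have colV : forall a u i, (1 <= i <= r)%N -> Defs.col adj vcol ecol a u = i ->
    u = a /\ vcol a = i.
  move=> a u i /andP[i1 ir]; rewrite /Defs.col; case: (a =P u) => [-> //|_].
  case: ifP => [Hadj Ei|_ Ei].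
    by have /andP[H _] := ecolB _ _ Hadj; move: H; rewrite Ei ltnNge ir.
  by move: i1; rewrite -Ei.
have hA : forall a b j l, (1 <= j <= r)%N ->
    (m2 r adj vcol ecol eta a b j l <= 1)%N /\
    ((0 < m2 r adj vcol ecol eta a b j l)%N -> vcol a = j).
  move=> a b j l jB; split.
    rewrite /m2 -(cards1 a); apply: subset_leq_card; apply/subsetP => u.
    rewrite !inE => /andP[/andP[_ /eqP cau] _].
    by have [-> _] := colV a u j jB cau.
  rewrite /m2 => /card_gt0P[u]; rewrite inE => /andP[/andP[_ /eqP cau] _].
  by have [_ ->] := colV a u j jB cau.
have hB : forall a b j l, (1 <= j <= r)%N ->
    (m2 r adj vcol ecol eta a b l j <= 1)%N /\
    ((0 < m2 r adj vcol ecol eta a b l j)%N -> vcol b = j).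
  move=> a b j l jB; split.
    rewrite /m2 -(cards1 b); apply: subset_leq_card; apply/subsetP => u.
    rewrite !inE => /andP[_ /eqP cub]; rewrite colC in cub.
    by have [-> _] := colV b u j jB cub.
  rewrite /m2 => /card_gt0P[u]; rewrite inE => /andP[_ /eqP cub].
  rewrite colC in cub.
  by have [_ ->] := colV b u j jB cub.
have Fcol : forall k, inF adj vcol ecol k -> forall a b,
    Defs.col adj vcol ecol a b = k -> vcol a = vcol b.
  move=> k [i [v [w [vw vi wi cvw]]]] a b cab.
  case: (a =P b) => [->//|nab].
  have k1 : (1 <= k)%N.
    move: vw; rewrite -cvw /inEt /Defs.col; case: (v =P w) => /= [_ _|_ vw].
      by case/andP: (vcolB v).
    rewrite vw; case/andP: (ecolB v w vw) => H _; exact: leq_ltn_trans (leq0n r) H.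
  have adjab : adj a b.
    move: cab; rewrite /Defs.col; case: eqP => // _; case: ifP => // _ e.
    by move: k1; rewrite -e.
  have HM := HM1 v w a b vw (introT orP (or_intror adjab)) (etrans cvw (esym cab))
    (vcol v) k.
  have iB := vcolB v.
  have pvw : piv r vcol eta v = piv r vcol eta w by rewrite /piv vi wi.
  have L1 : (0 < m2 r adj vcol ecol eta v w (vcol v) k)%N.
    apply/card_gt0P; exists v; rewrite inE -pvw minnn leqnn cvw eqxx andbT /=.
    by rewrite /Defs.col eqxx.
  have L2 : (0 < m2 r adj vcol ecol eta v w k (vcol v))%N.
    apply/card_gt0P; exists w; rewrite inE pvw minnn leqnn /=.
    rewrite cvw eqxx /Defs.col eqxx wi -vi eqxx.
    done.
  have [A1 A2] := hA a b (vcol v) k iB.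
  have [B1 B2] := hB a b (vcol v) k iB.
  move: HM; rewrite /m2b => HM.
  rewrite A2 ?B2 //.
    move: HM A1 B1 L1 L2; lia.
  move: HM A1 B1 L1 L2; lia.
have prod : forall k h v w,
    (Jm adj vcol ecol k *m Jm adj vcol ecol h) v w =
    #|[set u | (Defs.col adj vcol ecol v u == k) && (Defs.col adj vcol ecol u w == h)]|%:Z.
  move=> k h v w; rewrite mxE.
  under eq_bigr do rewrite !mxE -PoszM mulnb.
  rewrite -(big_morph Posz PoszD (erefl _)); congr Posz.
  rewrite -sum1_card [RHS]big_mkcond /=; apply: eq_bigr => j _; rewrite inE.
  by case: (_ && _).
have m2eq : forall k h, inF adj vcol ecol k -> inF adj vcol ecol h -> forall v w,
    #|[set u | (Defs.col adj vcol ecol v u == k) && (Defs.col adj vcol ecol u w == h)]|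
    = m2 r adj vcol ecol eta v w k h.
  move=> k h Fk Fh v w; rewrite /m2; apply: eq_card => u; rewrite !inE.
  case: (Defs.col adj vcol ecol v u =P k) => [cvu|]; last by rewrite !andbF.
  case: (Defs.col adj vcol ecol u w =P h) => [cuw|]; last by rewrite !andbF.
  rewrite /piv (Fcol _ Fk _ _ cvu) -(Fcol _ Fh _ _ cuw) minnn leqnn.
  done.
split.
- move=> k Fk; split; apply/matrixP => a b; rewrite !mxE.
    case: (Defs.col adj vcol ecol a b =P k) => [e|]; last by case: ifP.
    by rewrite (Fcol _ Fk _ _ e) eqxx.
  case: (Defs.col adj vcol ecol a b =P k) => [e|]; last by case: ifP.
  by rewrite /piv (Fcol _ Fk _ _ e) leqnn.
- move=> k kB nF; apply/matrixP => a b; rewrite !mxE.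
  case: eqP => // E; case: (Defs.col adj vcol ecol a b =P k) => // e.
  exfalso; apply: nF; exists (vcol a); exists a, b; split => //.
  move: e; rewrite /inEt /Defs.col; case: eqP => // _; case: ifP => // _ e.
  by move: kB; rewrite -e.
- by move=> k h Fk Fh v w _; rewrite prod m2eq.
- move=> HM2 i _ k h Fk Fh.
  have Fk' : inF adj vcol ecol k by exists i.
  have Fh' : inF adj vcol ecol h by exists i.
  apply/matrixP => v w; rewrite !prod.
  case: (vcol v =P vcol w) => E.
    rewrite (_ : [set u | (Defs.col adj vcol ecol v u == h) && (Defs.col adj vcol ecol u w == k)]
      = [set u | (Defs.col adj vcol ecol w u == k) && (Defs.col adj vcol ecol u v == h)]).
      by rewrite !m2eq // HM2.
    by apply/setP => u; rewrite !inE (colC v u) (colC u w) andbC.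
  have emp : forall k h, inF adj vcol ecol k -> inF adj vcol ecol h ->
      #|[set u | (Defs.col adj vcol ecol v u == k) && (Defs.col adj vcol ecol u w == h)]| = 0%N.
    move=> k0 h0 F0 G0; apply/eqP; rewrite cards_eq0; apply/eqP/setP => u.
    rewrite !inE; apply/negbTE/andP => -[/eqP a /eqP b]; apply: E.
    exact: etrans (Fcol _ F0 _ _ a) (Fcol _ G0 _ _ b).
  by rewrite (emp k h) // (emp h k).
Qed.
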